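(* Let $X$ be a distance-regular graph of diameter $d\geq 2$ on $n$ vertices with degree $k$, $\lambda=a_1$, $\mu=c_2$, and put $r=(n-1)/k$. Then $$\min(\lambda,\mu)<k\left(1+\min\left(\frac{r-1}{d-1},\left(\frac{r}{d}\right)^{\frac{1}{d-1}}\right)\right)^{-1}\quad\text{and}\quad \mu<k\max\left(\frac{d-1}{r-1},\left(\frac{d}{r}\right)^{\frac{1}{d-1}}\right).$$
   Context: A connected graph $X$ of diameter $d$ is distance-regular if there are integers $a_i,b_i,c_i$ ($0\le i\le d$) such that for all vertices $v,w$ with $\mathrm{dist}(v,w)=i$, $w$ has exactly $c_i$ neighbours at distance $i-1$, $a_i$ at distance $i$, $b_i$ at distance $i+1$ from $v$; $X$ is $k$-regular with $k=b_0$; $\lambda=a_1$, $\mu=c_2$. *)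

(* Defs.v *)
From mathcomp Require Import all_boot.
From Stdlib Require Import Reals.
Set Implicit Arguments. Unset Strict Implicit. Unset Printing Implicit Defensive.

Fixpoint ball (T : finType) (e : rel T) (i : nat) (v : T) : {set T} :=
  match i with
  | 0 => [set v]
  | i'.+1 => let B := ball e i' v in B :|: [set y | [exists x in B, e x y]]
  end.

(* graph distance: least i with w in ball i v (searched in 0..#|T|-1, which
   suffices in a connected graph) *)
Definition gdist (T : finType) (e : rel T) (v w : T) : nat :=
  find (fun i => w \in ball e i v) (iota 0 #|T|).

Definition distance_regular (T : finType) (e : rel T) (d : nat)
    (a b c : nat -> nat) : Prop :=
  (forall v w : T, connect e v w) /\
  (exists v w : T, gdist e v w = d) /\
  (forall v w : T, gdist e v w <= d) /\
  (forall v w : T,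
     let i := gdist e v w in
     [/\ #|[set x | e w x & (gdist e v x).+1 == i]| = c i,
         #|[set x | e w x & gdist e v x == i]| = a i &
         #|[set x | e w x & gdist e v x == i.+1]| = b i]).

(* Main.v *)
Require Import Defs.
From mathcomp Require Import all_boot.
From Stdlib Require Import Reals Lra.
From mathcomp Require Import zify.
Set Implicit Arguments. Unset Strict Implicit.


Lemma ballS (T : finType) (e : rel T) i v :
  ball e i.+1 v = ball e i v :|: [set y | [exists x in ball e i v, e x y]].
Proof. by []. Qed.

Lemma ball_sub (T : finType) (e : rel T) i j v : i <= j -> ball e i v \subset ball e j v.
Proof.
elim: j => [|j IH]; first by rewrite leqn0 => /eqP->.
rewrite leq_eqVlt => /orP[/eqP->//|/IH H].
by apply: subset_trans H _; rewrite ballS subsetUl.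
Qed.

Lemma ball_subS (T : finType) (e : rel T) i v y :
  y \in ball e i v -> y \in ball e i.+1 v.
Proof. by rewrite ballS inE => ->. Qed.

Lemma ball_step (T : finType) (e : rel T) w x i y :
  e w x -> y \in ball e i x -> y \in ball e i.+1 w.
Proof.
move=> ewx; elim: i y => [|i IH] y.
  rewrite /= inE => /eqP->; rewrite !inE; apply/orP; right.
  by apply/existsP; exists w; rewrite inE eqxx.
rewrite ballS inE => /orP[/IH H|].
  by exact: ball_subS.
rewrite inE => /existsP[z /andP[zin ezy]].
rewrite ballS inE; apply/orP; right; rewrite inE; apply/existsP; exists z.
by rewrite IH.
Qed.

Lemma ball_sym (T : finType) (e : rel T) i v w :
  symmetric e -> w \in ball e i v -> v \in ball e i w.
Proof.
move=> se; elim: i w => [|i IH] w.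
  by rewrite /= !inE => /eqP->.
rewrite ballS inE => /orP[/IH H|].
  by exact: ball_subS.
rewrite inE => /existsP[z /andP[zin ezw]].
by apply: (@ball_step _ e w z); [rewrite se| apply: IH].
Qed.

Lemma path_ball (T : finType) (e : rel T) v p :
  path e v p -> last v p \in ball e (size p) v.
Proof.
elim: p v => [|x p IH] v /=; first by rewrite inE.
by case/andP=> evx px; apply: ball_step evx (IH _ px).
Qed.

Section G.
Lemma gdist_in (T : finType) (e : rel T) (v w : T) :
  connect e v w -> w \in ball e (gdist e v w) v.
Proof.
case/connectP=> p pth ->.
case/shortenP: pth => p' pth' uq _.
have Hs : size p' < #|T|.
  move/card_uniqP: uq => /= H.
  by have := max_card (mem (v :: p')); rewrite H.
have hh : has (fun i => last v p' \in ball e i v) (iota 0 #|T|).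
  by apply/hasP; exists (size p'); [rewrite mem_iota | apply: path_ball].
have := nth_find 0 hh.
have hf : find (fun i => last v p' \in ball e i v) (iota 0 #|T|) < #|T| by move: hh; rewrite has_find size_iota.
by rewrite nth_iota // add0n; apply.
Qed.
End G.

Lemma gdist_min (T : finType) (e : rel T) (v w : T) i :
  w \in ball e i v -> gdist e v w <= i.
Proof.
move=> H; rewrite /gdist.
case: (ltnP i #|T|) => hi.
  rewrite leqNgt; apply/negP => /(before_find 0).
  by rewrite nth_iota // H.
by apply: leq_trans hi; have := find_size (fun i => w \in ball e i v) (iota 0 #|T|); rewrite size_iota.
Qed.

Definition conn {T : finType} (e : rel T) := forall v w : T, connect e v w.

Lemma gdist_sym (T : finType) (e : rel T) (v w : T) :
  symmetric e -> conn e -> gdist e v w = gdist e w v.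
Proof.
move=> se hc; apply/eqP; rewrite eqn_leq.
by rewrite !gdist_min // ball_sym // gdist_in.
Qed.

Lemma gdist0 (T : finType) (e : rel T) (v : T) : gdist e v v = 0.
Proof. by apply/eqP; rewrite -leqn0 gdist_min // inE. Qed.

Lemma gdist0_eq (T : finType) (e : rel T) (v w : T) :
  conn e -> gdist e v w = 0 -> w = v.
Proof. by move=> hc H; have := gdist_in (hc v w); rewrite H inE => /eqP. Qed.

Lemma gdist_edge (T : finType) (e : rel T) (v w x : T) :
  conn e -> e w x -> gdist e v x <= (gdist e v w).+1.
Proof.
move=> hc ewx; apply: gdist_min; rewrite ballS !inE; apply/orP; right.
by apply/existsP; exists w; rewrite ewx gdist_in.
Qed.

Lemma gdist_pred (T : finType) (e : rel T) (v w : T) j :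
  conn e -> gdist e v w = j.+1 -> exists x, e x w /\ gdist e v x = j.
Proof.
move=> hc H; have := gdist_in (hc v w); rewrite H ballS inE => /orP[|].
  by move/gdist_min; rewrite H ltnn.
rewrite inE => /existsP[x /andP[xin exw]]; exists x; split=> //.
have h1 := gdist_min xin; have h2 := gdist_edge v hc exw; lia.
Qed.

Lemma gdist_edge1 (T : finType) (e : rel T) (w x : T) :
  conn e -> irreflexive e -> e w x -> gdist e w x = 1.
Proof.
move=> hc ir ewx; have := gdist_edge w hc ewx; rewrite gdist0.
case H: (gdist e w x) => [|[|]] // _.
by move: ewx; rewrite (gdist0_eq hc H) ir.
Qed.

Lemma gdist_down (T : finType) (e : rel T) (v w : T) j i :
  conn e -> gdist e v w = j -> i <= j -> exists u, gdist e v u = i.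
Proof.
move=> hc; elim: j w => [|j IH] w H hi.
  by exists w; move: hi; rewrite leqn0 H => /eqP.
case: (ltnP i j.+1) => hi'; last by exists w; rewrite H; apply/eqP; rewrite eqn_leq hi hi'.
by have [x [_ hx]] := gdist_pred hc H; apply: (IH x hx).
Qed.

Section DR.
Lemma dr_conn (T : finType) (e : rel T) d a b c :
  distance_regular e d a b c -> conn e.
Proof. by case. Qed.

Lemma hB (T : finType) (e : rel T) d a b c (v w : T) i :
  distance_regular e d a b c -> gdist e v w = i ->
  #|[set x | e w x & gdist e v x == i.+1]| = b i.
Proof. by case=> _ [_ [_ H]] <-; have [] := H v w. Qed.

Lemma hC (T : finType) (e : rel T) d a b c (v w : T) i :
  distance_regular e d a b c -> gdist e v w = i ->
  #|[set x | e w x & (gdist e v x).+1 == i]| = c i.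
Proof. by case=> _ [_ [_ H]] <-; have [] := H v w. Qed.

Lemma hA (T : finType) (e : rel T) d a b c (v w : T) i :
  distance_regular e d a b c -> gdist e v w = i ->
  #|[set x | e w x & gdist e v x == i]| = a i.
Proof. by case=> _ [_ [_ H]] <-; have [] := H v w. Qed.

Lemma hdeg (T : finType) (e : rel T) d a b c (w : T) :
  irreflexive e -> distance_regular e d a b c ->
  #|[set x | e w x]| = b 0.
Proof.
move=> ir DR; rewrite -(hB DR (gdist0 e w)); apply: eq_card => x; rewrite !inE.
by case E: (e w x) => //=; rewrite gdist_edge1 //; apply: dr_conn DR.
Qed.

Lemma sub_nb (T : finType) (e : rel T) (w : T) (P : pred T) :
  #|[set x | e w x & P x]| <= #|[set x | e w x]|.
Proof. by apply: subset_leq_card; apply/subsetP => x; rewrite !inE => /andP[]. Qed.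

Lemma mono1 (T : finType) (e : rel T) d a b c (v w : T) j :
  symmetric e -> distance_regular e d a b c -> gdist e v w = j.+1 ->
  b j.+1 <= b j /\ c j <= c j.+1.
Proof.
move=> se DR H; have hc := dr_conn DR.
have H' : gdist e w v = j.+1 by rewrite gdist_sym.
have [x [exv hx]] := gdist_pred hc H'.
have hxw : gdist e x w = j by rewrite gdist_sym.
split.
  rewrite -(hB DR H) -(hB DR hxw); apply: subset_leq_card; apply/subsetP => z.
  rewrite !inE => /andP[ewz /eqP hz]; rewrite ewz /=.
  have h1 := gdist_edge z hc exv.
  have h2 := gdist_edge x hc ewz.
  rewrite (gdist_sym z v se hc) (gdist_sym z x se hc) in h1; apply/eqP; lia.
rewrite -(hC DR H) -(hC DR hxw); apply: subset_leq_card; apply/subsetP => z.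
rewrite !inE => /andP[ewz /eqP hz]; rewrite ewz /=.
have h1 := gdist_edge z hc exv.
have h2 : gdist e v w <= (gdist e v z).+1 by apply: gdist_edge hc _; rewrite se.
rewrite (gdist_sym z v se hc) (gdist_sym z x se hc) in h1; apply/eqP; lia.
Qed.

Lemma mono (T : finType) (e : rel T) d a b c (v w : T) j :
  symmetric e -> distance_regular e d a b c -> gdist e v w = j ->
  (1 <= j -> b j <= b 1) /\ (2 <= j -> c 2 <= c j).
Proof.
move=> se DR; have hc := dr_conn DR.
elim: j w => [|j IH] w H; first by [].
have [x [_ hx]] := gdist_pred hc H.
have [m1 m2] := mono1 se DR H.
have [i1 i2] := IH x hx.
split=> hj.
  case: (ltnP 0 j) => hj0; first by apply: leq_trans m1 (i1 hj0).
  by have -> : j = 0 by lia.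
case: (ltnP 1 j) => hj1; first by apply: leq_trans (i2 hj1) m2.
by have -> : j = 1 by lia.
Qed.
End DR.

Lemma sum_ind (T : finType) (P Q : pred T) :
  \sum_(z | P z) (Q z : nat) = #|[set z | Q z & P z]|.
Proof.
rewrite -sum1dep_card big_mkcond [RHS]big_mkcond; apply: eq_bigr => z _.
by case: (P z); case: (Q z).
Qed.

Section Sph.
Definition S (T : finType) (e : rel T) (v : T) i := [set w | gdist e v w == i].

Lemma cardS0 (T : finType) (e : rel T) (v : T) : conn e -> #|S e v 0| = 1.
Proof.
move=> hc; rewrite -(cards1 v); apply: eq_card => w; rewrite !inE.
apply/eqP/eqP => [/(gdist0_eq hc)//|->]; exact: gdist0.
Qed.

Lemma cardS1 (T : finType) (e : rel T) d a b c (v : T) :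
  symmetric e -> irreflexive e -> distance_regular e d a b c -> #|S e v 1| = b 0.
Proof.
move=> se ir DR; have hc := dr_conn DR.
rewrite -(hdeg v ir DR); apply: eq_card => w; rewrite !inE.
apply/eqP/idP => [H|]; last by apply: gdist_edge1.
by have [x [exw /(gdist0_eq hc) xv]] := gdist_pred hc H; rewrite -xv.
Qed.

Lemma dcount (T : finType) (e : rel T) d a b c (v : T) i :
  symmetric e -> distance_regular e d a b c ->
  #|S e v i| * b i = #|S e v i.+1| * c i.+1.
Proof.
move=> se DR.
have E1 : \sum_(w in S e v i) \sum_(z in S e v i.+1) (e w z : nat) = #|S e v i| * b i.
  rewrite -sum_nat_const; apply: eq_bigr => w; rewrite inE => /eqP hw.
  by rewrite sum_ind -(hB DR hw); apply: eq_card => z; rewrite !inE.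
have E2 : \sum_(z in S e v i.+1) \sum_(w in S e v i) (e w z : nat) = #|S e v i.+1| * c i.+1.
  rewrite -sum_nat_const; apply: eq_bigr => z; rewrite inE => /eqP hz.
  rewrite sum_ind -(hC DR hz); apply: eq_card => w; rewrite !inE (se z w).
  by rewrite eqSS.
by rewrite -E1 -E2; apply: exchange_big.
Qed.

Lemma total (T : finType) (e : rel T) d a b c (v : T) :
  distance_regular e d a b c -> #|T| = \sum_(i < d.+1) #|S e v i|.
Proof.
move=> DR; have hle : forall w, gdist e v w < d.+1 by case: DR => _ [_ [H _]] w; apply: H.
rewrite -sum1_card.
have -> : \sum_(w in T) 1 = \sum_(w in T) \sum_(i < d.+1) (gdist e v w == i : nat).
  apply: eq_bigr => w _.
  rewrite (bigD1 (Ordinal (hle w))) //= eqxx big1 // => i ne.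
  case E: (gdist e v w == i) => //; move: ne; case/eqP; apply: val_inj => /=.
  by apply/eqP; rewrite eq_sym.
rewrite exchange_big; apply: eq_bigr => i _.
by rewrite sum_ind; apply: eq_card => w; rewrite !inE andbT.
Qed.
End Sph.

Lemma nat_facts (T : finType) (e : rel T) d a b c :
  symmetric e -> irreflexive e -> distance_regular e d a b c -> 2 <= d ->
  exists s : nat -> nat,
  [/\ #|T| = 1 + \sum_(i < d) s i.+1, s 1 = b 0,
      (forall i, s i.+2 * c 2 <= s i.+1 * b 1),
      1 <= c 2 & c 2 <= b 0 /\ b 1 + a 1 + 1 <= b 0].
Proof.
move=> se ir DR d2; have hc := dr_conn DR.
have [v0 [w0 hd]] : exists v0 w0, gdist e v0 w0 = d by case: DR => _ [].
exists (fun i => #|S e v0 i|); split.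
- by rewrite (total v0 DR) big_ord_recl cardS0.
- exact: (cardS1 v0 se ir DR).
- move=> i; have := dcount v0 i.+1 se DR.
  case: (posnP #|S e v0 i.+2|) => [->|]; first by rewrite mul0n.
  rewrite card_gt0 => /set0Pn [w]; rewrite inE => /eqP hw E.
  have [_ m2] := mono se DR hw.
  have [x [_ hx]] := gdist_pred hc hw.
  have [m1 _] := mono se DR hx.
  apply: (@leq_trans (#|S e v0 i.+2| * c i.+2)); first by rewrite leq_mul2l m2 // orbT.
  by rewrite -E leq_mul2l m1 // orbT.
- have [u hu] := gdist_down hc hd d2.
  rewrite -(hC DR hu) card_gt0; apply/set0Pn.
  have [x [exu hx]] := gdist_pred hc hu.
  by exists x; rewrite inE hx eqxx andbT se.
split.
  have [u hu] := gdist_down hc hd d2.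
  by rewrite -(hC DR hu) -(hdeg u ir DR) sub_nb.
have [w hw] := gdist_down hc hd (ltnW d2).
rewrite -(hA DR hw) -(hB DR hw) -(hdeg w ir DR).
have ew : e w v0.
  by have [x [exw /(gdist0_eq hc) xv]] := gdist_pred hc hw; rewrite -xv se.
have H1 : #|[set x | (x == v0) & e w x]| = 1.
  rewrite -(cards1 v0); apply: eq_card => x; rewrite !inE.
  by case: eqP => // ->.
have L : \sum_(x | e w x) ((gdist e v0 x == 1) + (gdist e v0 x == 2) + (x == v0))
    <= \sum_(x | e w x) 1.
  apply: leq_sum => x _.
  case: (x =P v0) => [->|_]; first by rewrite gdist0.
  by case: (gdist e v0 x) => [|[|[|]]].
rewrite !big_split /= !sum_ind H1 sum1dep_card in L.
apply: leq_trans L; rewrite leq_add2r addnC; apply: leq_add; apply/eq_leq/eq_card => x;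
  by rewrite !inE andbC.
Qed.

Lemma geo (s : nat -> nat) k p q :
  s 1 = k -> (forall i, s i.+2 * q <= s i.+1 * p) ->
  forall i, s i.+1 * expn q i <= k * expn p i.
Proof.
move=> s1 H; elim=> [|i IH]; first by rewrite !expn0 !muln1 s1.
rewrite !expnSr; have := H i; nia.
Qed.

Lemma expsplit x i n : i <= n -> expn x n = expn x i * expn x (n - i).
Proof. by move=> h; rewrite -expnD subnKC. Qed.

Lemma expn_mono m n e : m <= n -> expn m e <= expn n e.
Proof. by move=> h; elim: e => [|e IH]; rewrite ?expn0 // !expnS leq_mul. Qed.

Lemma term_bound (s : nat -> nat) k p q M n i :
  s 1 = k -> (forall i, s i.+2 * q <= s i.+1 * p) -> q <= M -> i <= n ->
  s i.+1 * expn q n <= k * expn p i * expn M (n - i).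
Proof.
move=> s1 H qM hi; rewrite (expsplit q hi) mulnA.
apply: leq_mul; first exact: geo.
exact: expn_mono.
Qed.

Lemma claim2_nat (s : nat -> nat) k p q d' :
  s 1 = k -> (forall i, s i.+2 * q <= s i.+1 * p) -> p < k -> q <= k -> 1 <= d' ->
  (\sum_(i < d'.+1) s i.+1) * expn q d' < d'.+1 * (k * expn k d').
Proof.
move=> s1 H pk qk d1.
set K := k * expn k d'.
have k0 : 0 < k by lia.
have h0 : s 1 * expn q d' <= K.
  by have := term_bound s1 H qk (leq0n d'); rewrite expn0 muln1 subn0.
have hj : forall j, j < d' -> s j.+2 * expn q d' < K.
  move=> j hj; apply: leq_ltn_trans (term_bound s1 H qk hj) _.
  rewrite /K (expsplit k hj) mulnA ltn_mul2r expn_gt0 k0 /=.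
  by rewrite ltn_mul2l k0 ltn_exp2r.
rewrite big_ord_recl mulnDl big_distrl /=.
have : \sum_(i < d') s (bump 0 i).+1 * expn q d' <= \sum_(i < d') K.-1.
  by apply: leq_sum => i _; rewrite /bump /= add1n -ltnS prednK ?hj //; apply: leq_ltn_trans (hj i _).
rewrite sum_nat_const card_ord => hs.
have K0 : 0 < K by rewrite /K muln_gt0 k0 expn_gt0 k0.
have : d' * K.-1 < d' * K by rewrite ltn_mul2l d1 /=; lia.
move=> hlt; apply: (leq_ltn_trans (leq_add h0 hs)); lia.
Qed.

Lemma claim1a_nat (s : nat -> nat) k p q d' :
  s 1 = k -> (forall i, s i.+2 * q <= s i.+1 * p) -> p <= q -> 1 <= q ->
  (\sum_(j < d') s j.+2) * q <= d' * (k * p).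
Proof.
move=> s1 H pq q1.
rewrite big_distrl /=; rewrite -[d' in d' * _]card_ord -sum_nat_const.
apply: leq_sum => j _.
have := geo s1 H j.+1; rewrite !expnS => h.
have hq : 0 < expn q j by rewrite expn_gt0 q1.
rewrite -(leq_pmul2r hq) -mulnA; apply: leq_trans h _.
by rewrite -mulnA leq_mul2l leq_mul2l expn_mono ?orbT.
Qed.

Lemma claim1b_nat (s : nat -> nat) k p q d' :
  s 1 = k -> (forall i, s i.+2 * q <= s i.+1 * p) -> q <= p ->
  (\sum_(i < d'.+1) s i.+1) * expn q d' <= d'.+1 * (k * expn p d').
Proof.
move=> s1 H qp.
rewrite big_distrl /=.
apply: leq_trans (_ : _ <= \sum_(i < d'.+1) k * expn p d') _; last by rewrite sum_nat_const card_ord.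
apply: leq_sum => i _.
have hi : i <= d' by rewrite -ltnS.
by have := term_bound s1 H qp hi; rewrite -mulnA -expsplit.
Qed.
Section RR.
Local Open Scope R_scope.

Lemma frac_le (S K D Q P : R) (n : nat) : 0 < K -> 0 < D -> 0 < Q ->
  S * Q ^ n <= D * (K * P ^ n) -> S / K / D <= (P / Q) ^ n.
Proof.
move=> hK hD hQ h.
have hQn : 0 < Q ^ n by apply: pow_lt.
unfold Rdiv; rewrite Rpow_mult_distr pow_inv.
apply (Rmult_le_reg_r (K * D * Q ^ n)); first by repeat apply Rmult_lt_0_compat.
replace (S * / K * / D * (K * D * Q ^ n)) with (S * Q ^ n) by (field; lra).
replace (P ^ n * / Q ^ n * (K * D * Q ^ n)) with (D * (K * P ^ n)) by (field; lra).
exact h.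
Qed.

Lemma frac_lt (S K D Q P : R) (n : nat) : 0 < K -> 0 < D -> 0 < Q ->
  S * Q ^ n < D * (K * P ^ n) -> S / K / D < (P / Q) ^ n.
Proof.
move=> hK hD hQ h.
have hQn : 0 < Q ^ n by apply: pow_lt.
unfold Rdiv; rewrite Rpow_mult_distr pow_inv.
apply (Rmult_lt_reg_r (K * D * Q ^ n)); first by repeat apply Rmult_lt_0_compat.
replace (S * / K * / D * (K * D * Q ^ n)) with (S * Q ^ n) by (field; lra).
replace (P ^ n * / Q ^ n * (K * D * Q ^ n)) with (D * (K * P ^ n)) by (field; lra).
exact h.
Qed.

Lemma rpow_root (X : R) (d : nat) : 0 < X -> leq 1 d -> Rpower (X ^ d) (1 / INR d) = X.
Proof.
move=> hX hd.
have hd' : 0 < INR d by apply: lt_0_INR; apply/ltP.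
rewrite -Rpower_pow // Rpower_mult.
replace (INR d * (1 / INR d)) with 1 by (field; lra).
exact: Rpower_1.
Qed.

Lemma Rpower_inv (a y : R) : 0 < a -> Rpower (/ a) y = / Rpower a y.
Proof.
move=> ha; rewrite /Rpower ln_Rinv // -exp_Ropp; f_equal; ring.
Qed.

Lemma INRD m n : INR (m + n) = INR m + INR n.
Proof. exact: plus_INR. Qed.
Lemma INRM m n : INR (m * n) = INR m * INR n.
Proof. exact: mult_INR. Qed.
Lemma INRX m n : INR (expn m n) = INR m ^ n.
Proof.
elim: n => [|n IH]; first by rewrite expn0.
by rewrite expnS INRM IH /=.
Qed.
Lemma ltR m n : leq m.+1 n -> INR m < INR n.
Proof. by move/ltP; apply: lt_INR. Qed.
Lemma leR m n : leq m n -> INR m <= INR n.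
Proof. by move/leP; apply: le_INR. Qed.
Lemma Rdiv_le_0_compat (x y : R) : 0 <= x -> 0 < y -> 0 <= x / y.
Proof. move=> hx hy; apply: Rmult_le_pos => //; apply: Rlt_le; exact: Rinv_0_lt_compat. Qed.
End RR.

Theorem lemma4p4 (T : finType) (e : rel T) (d : nat) (a b c : nat -> nat) :
  symmetric e -> irreflexive e -> distance_regular e d a b c -> 2 <= d ->
  let n := INR #|T| in
  let k := INR (b 0) in
  let lam := INR (a 1) in
  let mu := INR (c 2) in
  let r := ((n - 1) / k)%R in
  let dR := INR d in
  (Rmin lam mu < k * / (1 + Rmin ((r - 1) / (dR - 1))
                                   (Rpower (r / dR) (1 / (dR - 1)))))%R /\
  (mu < k * Rmax ((dR - 1) / (r - 1)) (Rpower (dR / r) (1 / (dR - 1))))%R.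
Proof.
move=> se ir DR d2; cbv zeta.
have [s [hT s1 Hs mu1 [muk hb1]]] := nat_facts se ir DR d2.
case: d d2 DR hT => [|d'] // d2 DR hT.
have d1 : 1 <= d' by [].
have pk : b 1 < b 0 by lia.
have N2 := claim2_nat s1 Hs pk muk d1.
set Sg := \sum_(i < d'.+1) s i.+1 in hT N2.
have hSg : Sg = b 0 + \sum_(j < d') s j.+2 by rewrite /Sg big_ord_recl s1.
have hn : (INR #|T| - 1 = INR Sg)%R by rewrite hT INRD /=; lra.
have hdR : (INR d'.+1 - 1 = INR d')%R by rewrite S_INR; lra.
rewrite hn hdR.
set K := b 0 in s1 muk hb1 pk N2 hSg *.
set Q := c 2 in Hs mu1 muk N2 *.
set P := b 1 in Hs hb1 pk *.
set L := a 1 in hb1 *.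
have hk : (0 < INR K)%R by change (INR 0 < INR K)%R; apply: ltR; lia.
have hmu : (1 <= INR Q)%R by change (INR 1 <= INR Q)%R; apply: (leR mu1).
have hd' : (1 <= INR d')%R by change (INR 1 <= INR d')%R; apply: (leR d1).
have hSgk : (INR K <= INR Sg)%R by apply: leR; rewrite hSg leq_addr.
have hr : (1 <= INR Sg / INR K)%R.
  apply (Rmult_le_reg_r (INR K)) => //.
  by rewrite Rmult_1_l /Rdiv Rmult_assoc Rinv_l ?Rmult_1_r; lra.
have hpos : (0 < INR Sg / INR K / INR d'.+1)%R.
  apply: Rdiv_lt_0_compat; first lra.
  by change (INR 0 < INR d'.+1)%R; apply: ltR.
have hQ0 : (0 < INR Q)%R by lra.
split.
  set Rm := Rmin ((_ - 1) / _) _.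
  have hZ : (Rm <= INR P / INR Q)%R.
    case: (leqP P Q) => hPQ.
      apply: Rle_trans (Rmin_l _ _) _.
      have N1 := claim1a_nat d' s1 Hs hPQ mu1.
      have E : (INR Sg / INR K - 1 = INR (\sum_(j < d') s j.+2) / INR K)%R.
        by rewrite hSg INRD; field; lra.
      rewrite E -(pow_1 (INR P / INR Q)).
      apply: frac_le; try lra.
      by rewrite !pow_1 -!INRM; apply: leR.
    apply: Rle_trans (Rmin_r _ _) _.
    have N1 := claim1b_nat d' s1 Hs (ltnW hPQ).
    have hle : (INR Sg / INR K / INR d'.+1 <= (INR P / INR Q) ^ d')%R.
      apply: frac_le; try lra.
      by rewrite -!INRX -!INRM; apply: leR.
    have hP : (0 < INR P / INR Q)%R.
      apply: Rdiv_lt_0_compat => //; change (INR 0 < INR P)%R; apply: ltR; lia.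
    rewrite -[X in (_ <= X)%R](rpow_root hP d1); apply: Rle_Rpower_l; last by split.
    apply: Rlt_le; apply: Rdiv_lt_0_compat; lra.
  have hR0 : (0 <= Rm)%R.
    apply: Rmin_glb.
      apply: Rdiv_le_0_compat; lra.
    by apply: Rlt_le; rewrite /Rpower; apply: exp_pos.
  set m := Rmin _ _.
  have hmL : (m <= INR L)%R by apply: Rmin_l.
  have hmQ : (m <= INR Q)%R by apply: Rmin_r.
  have hm0 : (0 <= m)%R by apply: Rmin_glb; apply: pos_INR.
  have hLPK : (INR L + INR P + 1 <= INR K)%R.
    by rewrite -[1%R]/(INR 1) -!INRD; apply: leR; lia.
  have hPQ0 : (0 <= INR P / INR Q)%R by apply: Rdiv_le_0_compat; [apply: pos_INR|lra].
  have h1 : (m * (INR P / INR Q) <= INR P)%R.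
    apply: Rle_trans (Rmult_le_compat_r _ _ _ hPQ0 hmQ) _.
    by apply: Req_le; field; lra.
  have key : (m * (1 + Rm) < INR K)%R.
    apply: Rle_lt_trans (Rmult_le_compat_l _ _ _ hm0 (Rplus_le_compat_l 1 _ _ hZ)) _.
    lra.
  apply (Rmult_lt_reg_r (1 + Rm)); first lra.
  by rewrite Rmult_assoc Rinv_l ?Rmult_1_r; lra.
set Y := Rpower (INR Sg / INR K / INR d'.+1) (1 / INR d').
have hB : (Rpower (INR d'.+1 / (INR Sg / INR K)) (1 / INR d') = / Y)%R.
  by rewrite /Y -Rpower_inv // Rinv_div.
have hX : (0 < INR K / INR Q)%R by apply: Rdiv_lt_0_compat.
have hY : (Y < INR K / INR Q)%R.
  rewrite /Y -[X in (_ < X)%R](rpow_root hX d1); apply: Rlt_Rpower_l.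
    apply: Rdiv_lt_0_compat; lra.
  split=> //; apply: frac_lt; try lra.
  by rewrite -!INRX -!INRM; apply: ltR.
have hY0 : (0 < Y)%R by rewrite /Y /Rpower; apply: exp_pos.
apply: (Rlt_le_trans _ (INR K * / Y)).
  apply (Rmult_lt_reg_r Y) => //.
  rewrite Rmult_assoc Rinv_l ?Rmult_1_r; last lra.
  apply: Rlt_le_trans (Rmult_lt_compat_l _ _ _ hQ0 hY) _.
  by apply: Req_le; field; lra.
apply: Rmult_le_compat_l; first lra.
by rewrite hB; apply: Rmax_r.
Qed.
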